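(* In every approval-based SCV instance, every committee maximizing the SW-PAV score among all committees satisfies weak-SW-JR.
   Context: An approval-based sub-committee voting (SCV) instance consists of a set of voters $N=\{1,\ldots,n\}$, a finite set of candidates $C$ partitioned into candidate subsets $C_1,\ldots,C_\ell$, positive integer quotas $k_j\le |C_j|$ with $k=\sum_{j=1}^\ell k_j$, and approval ballots $A_i\subseteq C$ for $i\in N$. A committee is a set $W\subseteq C$ with $|W\cap C_j|=k_j$ for every $j$. Let $r(0)=0$ and $r(t)=\sum_{p=1}^t 1/p$ for $t\ge1$. The SW-PAV score of $W$ is $\sum_{i\in N} r(|W\cap A_i|)$. $W$ satisfies weak-SW-JR if for every $X\subseteq N$ with $|X|\ge n/k$ and $|(\bigcap_{i\in X}A_i)\cap C_j|\ge 1$ for all $j=1,\ldots,\ell$ we have $|W\cap \bigcup_{i\in X}A_i|\ge 1$. *)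

(* Defs.v *)
From HB Require Import structures.
From mathcomp Require Import all_boot all_order all_algebra.
Set Implicit Arguments. Unset Strict Implicit. Unset Printing Implicit Defensive.
Import Order.TTheory GRing.Theory Num.Theory.

(* An SCV instance: voters V (finType, N), candidates C (finType),
   partition of C into C_0..C_{l-1} given by part : C -> 'I_l,
   quotas q : 'I_l -> nat, approval ballots A : V -> {set C}. *)

Definition csub (C : finType) (l : nat) (part : C -> 'I_l) (j : 'I_l) : {set C} :=
  [set c | part c == j].

Definition ksize (l : nat) (q : 'I_l -> nat) : nat := \sum_(j < l) q j.

Definition is_committee (C : finType) (l : nat) (part : C -> 'I_l)
  (q : 'I_l -> nat) (W : {set C}) : Prop :=
  forall j : 'I_l, #|W :&: csub part j| = q j.

Definition harm (t : nat) : rat := \sum_(1 <= p < t.+1) (p%:R)^-1.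

Definition swpav (V C : finType) (A : V -> {set C}) (W : {set C}) : rat :=
  \sum_(i : V) harm #|W :&: A i|.

Definition weak_SW_JR (V C : finType) (l : nat) (part : C -> 'I_l)
  (q : 'I_l -> nat) (A : V -> {set C}) (W : {set C}) : Prop :=
  forall X : {set V},
    ((#|V|%:R / (ksize q)%:R : rat) <= #|X|%:R)%R ->
    (forall j : 'I_l, exists c, c \in csub part j /\ (forall i, i \in X -> c \in A i)) ->
    exists c, c \in W /\ (exists i, i \in X /\ c \in A i).

(* Main.v *)
Require Import Defs.
From HB Require Import structures.
From mathcomp Require Import all_boot all_order all_algebra.
From mathcomp Require Import ring lra zify.
Import Order.TTheory GRing.Theory Num.Theory.

Lemma harmS t : harm t.+1 = (harm t + (t.+1)%:R^-1)%R.
Proof. by rewrite /harm big_nat_recr. Qed.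

Lemma harm0 : harm 0 = 0%R.
Proof. by rewrite /harm big_geq. Qed.

Lemma harm_mono {m n} : m <= n -> (harm m <= harm n)%R.
Proof.
elim: n => [|n IH]; first by rewrite leqn0 => /eqP ->.
rewrite leq_eqVlt => /orP [/eqP -> //| ]; rewrite ltnS => /IH H.
rewrite harmS; apply: (le_trans H); by rewrite lerDl invr_ge0 ler0n.
Qed.

Lemma harm_bound (a b : nat) (x wA cA : bool) :
  b + wA = a + cA -> (x -> [/\ a = 0, cA & ~~ wA]) ->
  ((x%:R - wA%:R / a%:R : rat) <= harm b - harm a)%R.
Proof.
case: x => [H /(_ isT) [a0 cA1 wA0] | H _] /=.
  move: H; rewrite a0 cA1 (negbTE wA0) addn0 add0n => ->.
  by rewrite mul0r subr0 harmS harm0 add0r subr0 invr1.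
move: H; case: wA => /= H.
  case: a H => [|a] H.
    have := harm_mono (leq0n b); rewrite harm0 invr0 mulr0; lra.
  have hb : a <= b by move: H; case: cA => /= H; lia.
  have := harm_mono hb; rewrite harmS mul1r sub0r; move: (harm a) (harm b) ((a.+1)%:R^-1 : rat) => x y z; lra.
have hb : a <= b by move: H; case: cA => /= H; lia.
have := harm_mono hb; rewrite mul0r; lra.
Qed.

Lemma sum_ind (T : finType) (X : {set T}) :
  (\sum_i ((i \in X)%:R : rat) = #|X|%:R)%R.
Proof.
rewrite -sum1_card natr_sum [RHS]big_mkcond /=; apply: eq_bigr => i _.
by case: (i \in X).
Qed.

Lemma sum_ind2 (T : finType) (W A : {set T}) :
  (\sum_(w in W) ((w \in A)%:R : rat) = #|W :&: A|%:R)%R.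
Proof.
rewrite -sum1_card natr_sum big_mkcond /= [RHS]big_mkcond /=; apply: eq_bigr => i _.
by rewrite inE; case: (i \in W); case: (i \in A).
Qed.

Lemma card_swap (T : finType) (W S : {set T}) (w c : T) :
  w \in W -> c \notin W ->
  #|(c |: (W :\ w)) :&: S| + (w \in S) = #|W :&: S| + (c \in S).
Proof.
move=> wW cW.
have cw : c != w by apply/eqP => E; move: cW; rewrite E wW.
case cS: (c \in S).
  have E : (c |: (W :\ w)) :&: S = c |: ((W :&: S) :\ w).
    apply/setP => x; rewrite !inE; case: (eqVneq x c) => [->|] /=; rewrite ?cS ?cw ?(negbTE cW) ?andbF ?andbA //.
  rewrite E cardsU1 !inE (negbTE cW) !andbF /=.
  have := cardsD1 w (W :&: S); rewrite !inE wW /= => H; lia.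
have E : (c |: (W :\ w)) :&: S = ((W :&: S) :\ w).
  apply/setP => x; rewrite !inE; case: (eqVneq x c) => [->|] /=; rewrite ?cS ?cw ?(negbTE cW) ?andbF ?andbA //.
rewrite E.
have := cardsD1 w (W :&: S); rewrite !inE wW /= => H; lia.
Qed.

Theorem mainTheorem10 (V C : finType) (l : nat) (part : C -> 'I_l)
  (q : 'I_l -> nat) (A : V -> {set C}) :
  0 < #|V| -> 0 < l ->
  (forall j, 0 < q j) ->
  (forall j, q j <= #|csub part j|) ->
  forall W : {set C},
    is_committee part q W ->
    (forall W' : {set C}, is_committee part q W' -> (swpav A W' <= swpav A W)%R) ->
    weak_SW_JR part q A W.
Proof.
move=> Vpos lpos qpos qle W Wc Wopt X HX Hc.
case: (boolP [exists c, (c \in W) && [exists i, (i \in X) && (c \in A i)]]).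
  by case/existsP => c /andP [cW /existsP [i /andP [iX cA]]]; exists c; split=> //; exists i.
rewrite negb_exists => /forallP Hno.
have HnoP : forall i c, i \in X -> c \in W -> c \notin A i.
  move=> i c iX cW; move: (Hno c); rewrite cW /= negb_exists => /forallP /(_ i).
  by rewrite iX.
pose k := ksize q.
have kpos : 0 < k.
  rewrite /k /ksize (bigD1 (Ordinal lpos)) //=; exact: ltn_addr (qpos _).
have cardW : #|W| = k.
  rewrite /k /ksize -(eq_bigr _ (fun j _ => Wc j)).
  rewrite -sum1_card (partition_big part predT) //=.
  apply: eq_bigr => j _; rewrite -sum1_card; apply: eq_bigl => c.
  by rewrite !inE.
have Xpos : 0 < #|X|.
  rewrite lt0n; apply/negP => /eqP X0; move: HX; rewrite X0.
  by rewrite ler_pdivrMr ?ltr0n // mul0r lern0 => /eqP V0; rewrite V0 in Vpos.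
pose a i := #|W :&: A i|.
pose D (w : C) : rat := (\sum_i (w \in A i)%:R / (a i)%:R)%R.
pose S := (\sum_(w in W) D w)%R.
have HS : (S + #|X|%:R <= #|V|%:R)%R.
  rewrite /S /D exchange_big /= -sum_ind -big_split /=.
  rewrite -sum1_card natr_sum; apply: ler_sum => i _.
  rewrite -mulr_suml sum_ind2 -/(a i).
  case iX: (i \in X).
    have -> : a i = 0.
      apply/eqP; rewrite cards_eq0; apply/eqP/setP => x; rewrite !inE.
      apply/negbTE/negP => /andP [xW xA]; by move: (HnoP i x iX xW); rewrite xA.
    by rewrite mul0r add0r.
  rewrite addr0; have [->|a0] := eqVneq (a i) 0; first by rewrite mul0r ler01.
  by rewrite divff ?pnatr_eq0.
have Havg : exists2 w, w \in W & (k%:R * D w <= S)%R.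
  case: (boolP [exists w, (w \in W) && (k%:R * D w <= S)%R]).
    by case/existsP => w /andP [wW Hw]; exists w.
  rewrite negb_exists => /forallP Hall.
  have : (\sum_(w in W) S < \sum_(w in W) k%:R * D w)%R.
    apply: ltr_sum.
      apply/hasP; have /card_gt0P [w wW] : 0 < #|W| by rewrite cardW.
      by exists w; rewrite ?mem_index_enum.
    move=> w wW; move: (Hall w); rewrite wW /= -ltNge; exact.
  by rewrite -mulr_sumr sumr_const cardW mulr_natl ltxx.
case: Havg => w wW Hw.
have [c [cin cX]] := Hc (part w).
have cW : c \notin W.
  have /card_gt0P [i iX] := Xpos.
  apply/negP => cW; by move: (HnoP i c iX cW); rewrite cX.
pose W' := c |: (W :\ w).
have W'c : is_committee part q W'.
  move=> j; have := @card_swap _ W (csub part j) w c wW cW.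
  move: cin; rewrite -(Wc j) /csub !inE => /eqP -> /addIn; exact.
have Hsc := Wopt W' W'c.
have Hdiff : (#|X|%:R - D w <= swpav A W' - swpav A W)%R.
  rewrite /swpav -sumrB -sum_ind /D -sumrB.
  apply: ler_sum => i _; apply: harm_bound.
    exact: card_swap.
  move=> iX; split.
  - apply/eqP; rewrite cards_eq0; apply/eqP/setP => x; rewrite !inE.
    apply/negbTE/negP => /andP [xW xA]; by move: (HnoP i x iX xW); rewrite xA.
  - exact: cX.
  - exact: HnoP.
have Hn : (#|V|%:R <= #|X|%:R * k%:R :> rat)%R.
  by rewrite -ler_pdivrMr ?ltr0n.
have kp : (0 < k%:R :> rat)%R by rewrite ltr0n.
have Vp : (0 < #|V|%:R :> rat)%R by rewrite ltr0n.
move: Hsc Hdiff Hn kp Vp Hw HS.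
move: (#|X|%:R : rat) (#|V|%:R : rat) (k%:R : rat) (D w) S (swpav A W') (swpav A W).
move=> x n kk d s s1 s2; nra.
Qed.
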